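(* Let $p$ be a prime and let $G$ be an abelian group in which every element has order $p^k$ for some $k\ge0$. Let $H=\{x\in G: px=0\}$. Then the map $\mathbb{P}(H)\to\mathbb{P}(G)$ induced by inclusion, $[x]_H\mapsto[x]_G$, is a bijection.
   Context: An abelian group is regarded as a $\mathbb{Z}$-module. For a $\mathbb{Z}$-module $M$ let $M^\circ=M\setminus\{0\}$; define $x\sim'y$ on $M^\circ$ if there exist $m\in M$ and $r,s\in\mathbb{Z}$ with $x=rm$, $y=sm$; let $\sim_M$ be the equivalence relation generated by $\sim'$; and let $\mathbb{P}(M)=M^\circ/\sim_M$, with $[x]_M$ the class of $x$. *)

(* Defs.v *)
From HB Require Import structures.
From mathcomp Require Import all_boot all_order all_algebra.
From Stdlib Require Import Relations.
Unset Printing Implicit Defensive.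
Import GRing.Theory.
Local Open Scope ring_scope.

Definition nonzero (M : zmodType) := {x : M | x != 0}.

Definition sim' (M : zmodType) (x y : nonzero M) : Prop :=
  exists (m : M) (r s : int), val x = m *~ r /\ val y = m *~ s.

Definition simM (M : zmodType) : relation (nonzero M) :=
  clos_refl_sym_trans (nonzero M) (sim' M).

Definition cls (M : zmodType) (x : nonzero M) : nonzero M -> Prop := simM M x.

Definition PP (M : zmodType) := {S : nonzero M -> Prop | exists x, S = cls M x}.

Definition PPcls (M : zmodType) (x : nonzero M) : PP M :=
  exist _ (cls M x) (ex_intro _ x erefl).

Definition ptors (G : zmodType) (p : nat) : G -> bool := fun x => x *+ p == 0.

Lemma ptors_zmod_closed (G : zmodType) (p : nat) : zmod_closed (ptors G p).
Proof.
split; first by rewrite unfold_in /ptors mul0rn.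
by move=> x y; rewrite !unfold_in /ptors mulrnBl => /eqP -> /eqP ->; rewrite subrr.
Qed.

HB.instance Definition _ (G : zmodType) (p : nat) :=
  GRing.isZmodClosed.Build G (ptors G p) (ptors_zmod_closed G p).

Definition ptorsT (G : zmodType) (p : nat) := {x : G | ptors G p x}.

HB.instance Definition _ (G : zmodType) (p : nat) :=
  [isSub for (@sval G (fun x => ptors G p x)) : ptorsT G p -> G].
HB.instance Definition _ (G : zmodType) (p : nat) :=
  [Choice of ptorsT G p by <:].
HB.instance Definition _ (G : zmodType) (p : nat) :=
  [SubChoice_isSubZmodule of ptorsT G p by <:].

(* Main.v *)
Require Import Defs.
From mathcomp Require Import all_boot all_order all_algebra.
From Stdlib Require Import Relations ClassicalEpsilon FunctionalExtensionality PropExtensionality ProofIrrelevance.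
Import GRing.Theory.
Local Open Scope ring_scope.

Lemma kof_spec {p : nat} {G : zmodType} {x : G} (e : exists k, x *+ p ^ k == 0) :
  x *+ p ^ (ex_minn e) = 0 /\ forall k, x *+ p ^ k = 0 -> (ex_minn e <= k)%N.
Proof.
case: ex_minnP => n /eqP hn hmin; split => // k hk; apply: hmin; exact/eqP.
Qed.

Lemma kof_pos {p : nat} {G : zmodType} {x : G} (e : exists k, x *+ p ^ k == 0) :
  x != 0 -> (0 < ex_minn e)%N.
Proof.
move=> hx; have [h1 _] := kof_spec e; case: (ex_minn e) h1 => // h.
by rewrite expn0 mulr1n in h; rewrite h eqxx in hx.
Qed.

Lemma soc_ptors {p : nat} {G : zmodType} {x : G} (e : exists k, x *+ p ^ k == 0) :
  x != 0 -> ptors G p (x *+ p ^ (ex_minn e).-1).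
Proof.
move=> hx; have [h1 _] := kof_spec e; have hp := kof_pos e hx.
by rewrite /ptors -mulrnA -expnSr prednK // h1.
Qed.

Lemma soc_neq0 {p : nat} {G : zmodType} {x : G} (e : exists k, x *+ p ^ k == 0) :
  x != 0 -> x *+ p ^ (ex_minn e).-1 != 0.
Proof.
move=> hx; have [_ h2] := kof_spec e; have hp := kof_pos e hx.
apply/eqP => /h2; case: (ex_minn e) hp => // n _ /=; by rewrite ltnn.
Qed.

Lemma soc_key {p : nat} {G : zmodType} {m : G} (e : exists k, m *+ p ^ k == 0) (z : int) :
  prime p -> m != 0 -> m *~ (z * p%:Z) = 0 ->
  exists t : int, m *~ z = (m *+ p ^ (ex_minn e).-1) *~ t.
Proof.
move=> hp hm hz; have [h1 h2] := kof_spec e; have hn := kof_pos e hm.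
set n := ex_minn e in h1 h2 hn *.
have [u [v huv]] := Bezoutz (z * p%:Z) (p ^ n)%N%:Z.
have hg : m *+ gcdn (absz (z * p%:Z)%R) (absz (p ^ n)%N%:Z) = 0.
  have : m *~ gcdz (z * p%:Z) (p ^ n)%N%:Z = 0.
    rewrite -huv mulrzDr [u * _]mulrC [v * _]mulrC (mulrzA m (z * p%:Z)) hz mul0rz add0r mulrzA.
    by rewrite -[((p ^ n)%N)%:Z]natz mulrz_nat h1 mul0rz.
  by [].
have hd : (gcdn (absz (z * p%:Z)%R) (absz (p ^ n)%N%:Z) %| p ^ n)%N by apply: dvdn_gcdr.
move/(dvdn_pfactor _ _ hp): hd => [i hi hgi].
rewrite hgi in hg; have := h2 _ hg => hni.
have ein : i = n by apply/eqP; rewrite eqn_leq hi hni.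
have hdv : (p ^ n %| absz (z * p%:Z)%R)%N by rewrite -ein -hgi dvdn_gcdl.
have hdz : (p ^ n.-1 %| absz z)%N.
  rewrite abszM /= -(prednK hn) expnSr dvdn_pmul2r ?prime_gt0 // in hdv.
have : ((p ^ n.-1)%N%:Z %| z)%Z by [].
move/dvdzP => [q hq]; exists q.
by rewrite hq mulrC mulrzA -natz mulrz_nat.
Qed.

Lemma PP_eq (M : zmodType) (S T : PP M) : sval S = sval T -> S = T.
Proof.
case: S => S hS; case: T => T hT /= e; subst T; f_equal; apply: proof_irrelevance.
Qed.

Lemma simM_equiv (M : zmodType) : equivalence _ (simM M).
Proof.
split.
- move=> x; exact: rst_refl.
- move=> x y z; exact: rst_trans.
- move=> x y; exact: rst_sym.
Qed.

Lemma cls_eq (M : zmodType) (x y : nonzero M) : simM M x y -> cls M x = cls M y.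
Proof.
move=> h; apply: functional_extensionality => z; apply: propositional_extensionality.
rewrite /cls; split => hz.
- apply: rst_trans (rst_sym _ _ _ _ h) hz.
- apply: rst_trans h hz.
Qed.

Lemma PPcls_eq (M : zmodType) (x y : nonzero M) : simM M x y -> PPcls M x = PPcls M y.
Proof. by move=> h; apply: PP_eq => /=; apply: cls_eq. Qed.

Lemma cls_sim (M : zmodType) (x y : nonzero M) : cls M x = cls M y -> simM M x y.
Proof. move=> e; have : cls M y y by apply: rst_refl. by rewrite -e. Qed.

Definition rep {M : zmodType} (S : PP M) : nonzero M :=
  proj1_sig (constructive_indefinite_description _ (proj2_sig S)).

Lemma rep_spec (M : zmodType) (S : PP M) : S = PPcls M (rep S).
Proof.
apply: PP_eq => /=; rewrite /rep.
by case: constructive_indefinite_description.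
Qed.

Lemma rep_cls (M : zmodType) (x : nonzero M) : simM M (rep (PPcls M x)) x.
Proof. apply: cls_sim; have := congr1 sval (rep_spec _ (PPcls M x)) => /= e; by rewrite -e. Qed.

Lemma simM_map (M N : zmodType) (f : nonzero M -> nonzero N) :
  (forall a b, sim' M a b -> simM N (f a) (f b)) ->
  forall a b, simM M a b -> simM N (f a) (f b).
Proof.
move=> hf a b; elim.
- by move=> x y /hf.
- move=> x; exact: rst_refl.
- move=> x y _ h; exact: rst_sym.
- move=> x y z _ h1 _ h2; exact: rst_trans h1 h2.
Qed.

Lemma val_ptors_eq0 (G : zmodType) (p : nat) (h : ptorsT G p) : (val h == 0) = (h == 0).
Proof. by rewrite -val_eqE. Qed.

Lemma val_ptorsMz (G : zmodType) (p : nat) (h : ptorsT G p) (t : int) : val (h *~ t) = val h *~ t.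
Proof. by rewrite raddfMz. Qed.

Theorem theorem4p11 (p : nat) (G : zmodType) :
  prime p ->
  (forall x : G, exists k : nat, x *+ (p ^ k) = 0) ->
  exists F : PP (ptorsT G p) -> PP G,
    (forall (x : nonzero (ptorsT G p)) (y : nonzero G),
        val (val x) = val y -> F (PPcls _ x) = PPcls _ y) /\
    bijective F.
Proof.
move=> hp hG.
have e : forall x : G, exists k, x *+ p ^ k == 0.
  by move=> x; case: (hG x) => k hk; exists k; apply/eqP.
pose H := ptorsT G p.
have hiota : forall x : nonzero H, val (val x) != 0.
  by move=> x; rewrite val_ptors_eq0 (valP x).
pose iota := fun x : nonzero H => exist (fun y : G => y != 0) (val (val x)) (hiota x).
pose sc := fun x : nonzero G =>
  exist (fun y => ptors G p y) (val x *+ p ^ (ex_minn (e (val x))).-1)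
        (soc_ptors (e (val x)) (valP x)) : H.
have hsc : forall x : nonzero G, sc x != 0.
  by move=> x; rewrite -val_ptors_eq0 /=; apply: soc_neq0; apply: (valP x).
pose phi := fun x : nonzero G => exist (fun h : H => h != 0) (sc x) (hsc x).
have hiota_sim : forall a b, sim' H a b -> simM G (iota a) (iota b).
  move=> a b [m [r [s [ea eb]]]]; apply: rst_step; exists (val m), r, s.
  by rewrite /= ea eb !val_ptorsMz.
have hphi_sim : forall a b, sim' G a b -> simM H (phi a) (phi b).
  move=> a b [m [r [s [ea eb]]]]; apply: rst_step.
  have hm : m != 0.
    apply/eqP => hm0; move: (valP a); rewrite ea hm0 mul0rz eqxx //.
  have aux : forall (c : nonzero G) (r : int), val c = m *~ r ->
      exists t, val c *+ p ^ (ex_minn (e (val c))).-1 = (m *+ p ^ (ex_minn (e m)).-1) *~ t.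
    move=> c r' hc.
    have := soc_key (e m) (r' * (p ^ (ex_minn (e (val c))).-1)%N%:Z) hp hm.
    case.
      rewrite !mulrzA -hc -!natz !mulrz_nat; apply/eqP; apply: soc_ptors; exact: (valP c).
    move=> t ht; exists t; by rewrite -ht hc mulrzA -natz mulrz_nat.
  have [ta hta] := aux a r ea; have [tb htb] := aux b s eb.
  exists (exist (fun y => ptors G p y) (m *+ p ^ (ex_minn (e m)).-1)
        (soc_ptors (e m) hm) : H), ta, tb.
  by split; apply: val_inj; rewrite val_ptorsMz /=.
have phi_iota : forall s : nonzero H, phi (iota s) = s.
  move=> s; apply: val_inj; apply: val_inj => /=.
  have hs0 : val (val s) != 0 := hiota s.
  have [_ h2] := kof_spec (e (val (val s))).
  have hpos := kof_pos (e (val (val s))) hs0.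
  have h1 : (ex_minn (e (val (val s))) <= 1)%N.
    by apply: h2; rewrite expn1; apply/eqP; exact: (valP (val s)).
  have -> : ex_minn (e (val (val s))) = 1%N by apply/eqP; rewrite eqn_leq h1 hpos.
  by rewrite expn0 mulr1n.
have iota_phi : forall t : nonzero G, simM G (iota (phi t)) t.
  move=> t; apply: rst_step; exists (val t), (p ^ (ex_minn (e (val t))).-1)%N%:Z, 1.
  by split; rewrite /= ?mulr1z // -natz mulrz_nat.
pose F := fun S : PP H => PPcls G (iota (rep S)).
pose g := fun T : PP G => PPcls H (phi (rep T)).
exists F; split.
  move=> x y hxy; rewrite /F.
  have -> : y = iota x by apply: val_inj; rewrite /= hxy.
  apply: PPcls_eq; apply: (simM_map _ _ _ hiota_sim); apply: rep_cls.
exists g.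
- move=> S; rewrite {2}(rep_spec _ S) /g /F; apply: PPcls_eq.
  rewrite -{2}(phi_iota (rep S)).
  apply: (simM_map _ _ _ hphi_sim); apply: rep_cls.
- move=> T; rewrite {2}(rep_spec _ T) /g /F; apply: PPcls_eq.
  apply: rst_trans (iota_phi (rep T)).
  apply: (simM_map _ _ _ hiota_sim); apply: rep_cls.
Qed.
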